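(* In a monadic Markov logic network over a finite domain, the set of ground atoms (the random variables) has an exchangeable decomposition whose width equals the number of predicates.
   Context: A Markov logic network (MLN) is a finite set of pairs $(w,f)$ with $w\in\mathbb{R}$ and $f$ a function-free first-order formula containing no constants. Given a finite domain $\mathsf{D}$ of constants, the grounding replaces each formula by all its instantiations of logical variables with constants (same weight). The random variables are all ground atoms (binary); a world $\bm{x}$ (truth assignment to all ground atoms) has probability proportional to $\prod \exp(w)$ over ground formulas $(w,f)$ satisfied by $\bm{x}$. An MLN is monadic if all its predicates are unary. A variable decomposition $\{\bm{X}_1,\dots,\bm{X}_k\}$ partitions the variables; its width is $\max_i|\bm{X}_i|$. It is exchangeable if all blocks have equal size, each block is an ordered tuple, and for every permutation $\pi$ of $\{1,\dots,k\}$, $\Pr(\bm{X}_1=\bm{x}_1,\dots,\bm{X}_k=\bm{x}_k)=\Pr(\bm{X}_1=\bm{x}_{\pi(1)},\dots,\bm{X}_k=\bm{x}_{\pi(k)})$ for all block assignments. *)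

(* Defs.v *)
From HB Require Import structures.
From mathcomp Require Import all_boot all_order all_algebra perm.
From mathcomp Require Import reals sequences exp.
Set Implicit Arguments. Unset Strict Implicit. Unset Printing Implicit Defensive.
Import Order.TTheory GRing.Theory Num.Theory.
Local Open Scope ring_scope.

(** Function-free, constant-free first-order formulas (with equality) over a
    monadic signature of [m] unary predicates [P_0 .. P_(m-1)].
    Logical variables are named by natural numbers. *)
Inductive mformula (m : nat) : Type :=
  | FTrue
  | FFalse
  | FAtom of 'I_m & nat
  | FEq of nat & nat
  | FNot of mformula m
  | FAnd of mformula m & mformula m
  | FOr of mformula m & mformula m
  | FImp of mformula m & mformula m
  | FForall of nat & mformula m
  | FExists of nat & mformula m.

(** Free logical variables (possibly with repetitions). *)
Fixpoint fv m (f : mformula m) : seq nat :=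
  match f with
  | FTrue | FFalse => [::]
  | FAtom _ v => [:: v]
  | FEq u v => [:: u; v]
  | FNot g => fv g
  | FAnd g h | FOr g h | FImp g h => fv g ++ fv h
  | FForall v g | FExists v g => [seq u <- fv g | u != v]
  end.

Notation atom m D := (prod (ordinal m) (Finite.sort D)) (only parsing).
Notation world m D := {ffun atom m D -> bool} (only parsing).

Definition upd (D : Type) (env : nat -> D) (v : nat) (d : D) : nat -> D :=
  fun u => if u == v then d else env u.

Fixpoint sat m (D : finType) (x : world m D) (f : mformula m) (env : nat -> D) : bool :=
  match f with
  | FTrue => true
  | FFalse => false
  | FAtom i v => x (i, env v)
  | FEq u v => env u == env v
  | FNot g => ~~ sat x g env
  | FAnd g h => sat x g env && sat x h env
  | FOr g h => sat x g env || sat x h env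
  | FImp g h => sat x g env ==> sat x h env
  | FForall v g => [forall d : D, sat x g (upd env v d)]
  | FExists v g => [exists d : D, sat x g (upd env v d)]
  end.

Definition gvars m (f : mformula m) : seq nat := undup (fv f).

(** A grounding of f: a map from its (distinct) free variables to constants.
    [env_of d0 g] is the induced variable assignment ([d0] is only used for
    variables that do not occur free in f, hence is semantically irrelevant). *)
Definition env_of m (D : finType) (d0 : D) (f : mformula m)
    (g : {ffun 'I_(size (gvars f)) -> D}) : nat -> D :=
  fun u => match insub (index u (gvars f)) with
           | Some i => g i
           | None => d0
           end.

Definition mln (R : realType) (m : nat) := seq (R * mformula m)%type.

Definition mln_weight (R : realType) m (D : finType) (d0 : D) (M : mln R m)
    (x : world m D) : R :=
  \prod_(p <- M)
    \prod_(g : {ffun 'I_(size (gvars p.2)) -> D})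
       (if sat x p.2 (@env_of m D d0 p.2 g) then expR p.1 else 1).

Definition mln_prob (R : realType) m (D : finType) (d0 : D) (M : mln R m)
    (E : pred (world m D)) : R :=
  (\sum_(x : world m D | E x) mln_weight d0 M x) /
  (\sum_(x : world m D) mln_weight d0 M x).

Definition is_decomposition m (D : finType) k (B : 'I_k -> seq (atom m D)) : Prop :=
  (forall i, B i != [::]) /\
  perm_eq (flatten [seq B i | i <- enum 'I_k]) (enum {: atom m D}).

Definition width m (D : finType) k (B : 'I_k -> seq (atom m D)) : nat :=
  \max_(i < k) size (B i).

Definition block_event m (D : finType) k (B : 'I_k -> seq (atom m D)) s
    (xs : 'I_k -> s.-tuple bool) : pred (world m D) :=
  fun x => [forall i : 'I_k, map x (B i) == xs i].

Definition exchangeable (R : realType) m (D : finType) (d0 : D) (M : mln R m)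
    k (B : 'I_k -> seq (atom m D)) : Prop :=
  exists s : nat,
    (forall i, size (B i) = s) /\
    forall (pi : {perm 'I_k}) (xs : 'I_k -> s.-tuple bool),
      mln_prob d0 M (block_event B xs) =
      mln_prob d0 M (block_event B (fun i => xs (pi i))).

(* Main.v *)
Require Import Defs.
From HB Require Import structures.
From mathcomp Require Import all_boot all_order all_algebra perm.
From mathcomp Require Import reals sequences exp.
Set Implicit Arguments. Unset Strict Implicit. Unset Printing Implicit Defensive.
Import Order.TTheory GRing.Theory Num.Theory.

Lemma sat_ext m (D : finType) (x : {ffun 'I_m * D -> bool}) (f : mformula m) :
  forall env env', {in fv f, env =1 env'} -> sat x f env = sat x f env'.
Proof.
elim: f => //=.
- by move=> i v env env' H; rewrite H // mem_head.
- by move=> u v env env' H; rewrite !H // !inE eqxx ?orbT.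
- by move=> g IH env env' H; rewrite (IH _ env').
- by move=> g IHg h IHh env env' H; rewrite (IHg _ env') ?(IHh _ env') // => u Hu;
    apply: H; rewrite mem_cat Hu ?orbT.
- by move=> g IHg h IHh env env' H; rewrite (IHg _ env') ?(IHh _ env') // => u Hu;
    apply: H; rewrite mem_cat Hu ?orbT.
- by move=> g IHg h IHh env env' H; rewrite (IHg _ env') ?(IHh _ env') // => u Hu;
    apply: H; rewrite mem_cat Hu ?orbT.
- move=> v g IH env env' H; apply: eq_forallb => d; apply: IH => u Hu.
  rewrite /upd; case: eqP => // /eqP Huv; apply: H; by rewrite mem_filter Huv.
- move=> v g IH env env' H; apply: eq_existsb => d; apply: IH => u Hu.
  rewrite /upd; case: eqP => // /eqP Huv; apply: H; by rewrite mem_filter Huv.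
Qed.

Section Tau.
Variables (m : nat) (D : finType) (t t' : D -> D).
Hypotheses (tK : cancel t t') (t'K : cancel t' t).
Definition Phi (x : {ffun 'I_m * D -> bool}) : {ffun 'I_m * D -> bool} :=
  [ffun a => x (a.1, t a.2)].

Lemma sat_Phi x (f : mformula m) env : sat (Phi x) f env = sat x f (t \o env).
Proof.
elim: f env => //=.
- by move=> i v env; rewrite ffunE.
- by move=> u v env; rewrite (can_eq tK).
- by move=> g IH env; rewrite IH.
- by move=> g IHg h IHh env; rewrite IHg IHh.
- by move=> g IHg h IHh env; rewrite IHg IHh.
- by move=> g IHg h IHh env; rewrite IHg IHh.
- move=> v g IH env.
  have E d : sat (Phi x) g (upd env v d) = sat x g (upd (t \o env) v (t d)).
    by rewrite IH; apply: sat_ext => u _; rewrite /upd /=; case: eqP.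
  apply/forallP/forallP => H d.
    by move: (H (t' d)); rewrite E t'K.
  by rewrite E.
- move=> v g IH env.
  have E d : sat (Phi x) g (upd env v d) = sat x g (upd (t \o env) v (t d)).
    by rewrite IH; apply: sat_ext => u _; rewrite /upd /=; case: eqP.
  apply/existsP/existsP => -[d H].
    by exists (t d); rewrite -E.
  by exists (t' d); rewrite E t'K.
Qed.

Lemma Phi_inj : injective Phi.
Proof.
move=> x y /ffunP H; apply/ffunP => -[i d].
by move: (H (i, t' d)); rewrite !ffunE /= t'K.
Qed.

Lemma weight_Phi (R : realType) (d0 : D) (M : mln R m) x :
  mln_weight d0 M (Phi x) = mln_weight d0 M x.
Proof.
rewrite /mln_weight; apply: eq_bigr => p _.
set n := size (gvars p.2).
have hinj : injective (fun g : {ffun 'I_n -> D} => [ffun i => t (g i)]).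
  move=> g g' /ffunP H; apply/ffunP => i; move: (H i); rewrite !ffunE.
  exact: (can_inj tK).
rewrite [RHS](reindex_inj hinj) /=; apply: eq_bigr => g _.
rewrite sat_Phi (@sat_ext _ _ _ _ _ (env_of d0 [ffun i => t (g i)])) //.
move=> u Hu; rewrite /env_of /=.
have Hi : index u (gvars p.2) < n by rewrite index_mem /gvars mem_undup.
by rewrite insubT /= ffunE.
Qed.
End Tau.

Lemma prob_Phi (R : realType) m (D : finType) (d0 : D) (M : mln R m)
   (t t' : D -> D) (tK : cancel t t') (t'K : cancel t' t)
   (E E' : pred {ffun 'I_m * D -> bool}) :
  (forall x, E' x = E (Phi t x)) -> mln_prob d0 M E' = mln_prob d0 M E.
Proof.
move=> HE; rewrite /mln_prob; congr (_ / _)%R.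
rewrite [RHS](reindex_inj (Phi_inj t'K)) /=.
apply: eq_big => x; first by rewrite HE.
by rewrite (weight_Phi tK t'K).
Qed.

Theorem theorem5 (R : realType) (m : nat) (D : finType) (d0 : D) (M : mln R m) :
  exists (k : nat) (B : 'I_k -> seq (atom m D)),
    is_decomposition B /\ width B = m /\ exchangeable d0 M B.
Proof.
case: m M => [|m'] M.
  exists 0%N, (fun _ => [::]); split; [|split].
  - split; first by case.
    have -> : enum {: 'I_0 * D} = [::].
      apply/eqP; rewrite -size_eq0; apply/eqP.
      by move: (card_prod 'I_0 D); rewrite card_ord mul0n cardT.
    by rewrite /= enum_ord0.
  - by rewrite /width big_ord0.
  - exists 0%N; split; first by case.
    move=> pi xs; rewrite /mln_prob; congr (_ / _)%R; apply: eq_bigl => x.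
    by rewrite /block_event; apply/forallP/forallP => _ [].
set m := m'.+1.
set k := #|D|.
have kpos : (0 < k)%N by apply/card_gt0P; exists d0.
pose e (i : 'I_k) : D := enum_val i.
have eK : cancel e enum_rank by exact: enum_valK.
have rK : cancel enum_rank e by exact: enum_rankK.
pose B (i : 'I_k) := [seq (p, e i) | p <- enum 'I_m].
have sB i : size (B i) = m by rewrite size_map size_enum_ord.
exists k, B; split; [|split].
- split.
    by move=> i; rewrite -size_eq0 sB.
  change (perm_eq [seq (p, e i) | i <- enum 'I_k, p <- enum 'I_m] (enum {: 'I_m * D})).
  apply: uniq_perm; first apply: allpairs_uniq; rewrite ?enum_uniq //.
    move=> [i p] [j q] _ _ /= [-> /(can_inj eK) ->] //.
  move=> [p d]; rewrite mem_enum inE; apply/allpairsP.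
  exists (enum_rank d, p); rewrite !mem_enum /= rK; split=> //.
- rewrite /width; apply/anti_leq/andP; split.
    by apply/bigmax_leqP => i _; rewrite sB.
  by have := leq_bigmax (F := fun i => size (B i)) (Ordinal kpos); rewrite sB.
- exists m; split=> // pi xs.
  pose t d := e ((pi^-1)%g (enum_rank d)).
  pose t' d := e (pi (enum_rank d)).
  have tK : cancel t t' by move=> d; rewrite /t /t' eK permKV rK.
  have t'K : cancel t' t by move=> d; rewrite /t /t' eK permK rK.
  symmetry; apply: (@prob_Phi R m D d0 M t t' tK t'K (block_event B xs)) => x.
  rewrite /block_event.
  have Hm j : map (Phi t x) (B j) = [seq x (p, t (e j)) | p <- enum 'I_m].
    by rewrite -map_comp; apply: eq_map => p /=; rewrite ffunE.
  apply/forallP/forallP => H i.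
    rewrite Hm /t eK; have := H ((pi^-1)%g i); rewrite permKV.
    move=> Hx; rewrite /B -map_comp in Hx; exact: Hx.
  rewrite /B -map_comp; have := H (pi i); rewrite Hm /t eK permK.
  move=> Hx; exact: Hx.
Qed.
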